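(* Let $g\ge2$, let $p$ be a prime with $p\equiv1\pmod{4g}$, and let $K$ be a field of characteristic zero. Let $u(T)$ be the unique element of $1+T^{-1}\mathbb{Z}[[T^{-1}]]$ with $u(T)^{2g}-u(T)^{2g-1}+T^{-4g}=0$, and set $x(T)=T^2u(T)$ and $y(T)=-T\,x(T)^g$ in $\mathbb{Z}[[T^{-1}]][T]\subset K((T^{-1}))$. Let $A$ be the $K$-subalgebra of $K((T^{-1}))$ generated by $x(T)$ and $y(T)$. Then there exist $e_0\in\mathbb{Z}_{(p)}^*$, $a(T)\in A\cap\mathbb{Z}[[T^{-1}]][T]$ and $g(T)\in T^{-1}\mathbb{Z}[[T^{-1}]]$ such that $$T^p-e_0T=a(T)+g(T).$$
   Context: $\mathbb{Z}_{(p)}^*$ denotes the units of the localization of $\mathbb{Z}$ at $p$ (i.e. $p$-adic units in $\mathbb{Q}$). Note $y(T)^2=x(T)^{2g+1}+x(T)$, so $A\cong K[x,y]/(y^2-x^{2g+1}-x)$. *)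

(* Defs.v *)
From HB Require Import structures.
From mathcomp Require Import all_boot all_order all_algebra.
Set Implicit Arguments. Unset Strict Implicit. Unset Printing Implicit Defensive.
Import Order.TTheory GRing.Theory Num.Theory.
Local Open Scope ring_scope.

(* Formal Laurent series in T^{-1} over a ring R, i.e. elements of R((T^{-1})).
   [LSer d s] represents  sum_{k >= 0} s k * T^(d - k).
   Every element of R((T^{-1})) has such a representation (pad with zeros). *)
Record lser (R : Type) := LSer { ldeg : nat; lcoef : nat -> R }.

Section LSer.
Variable R : nzRingType.

Definition lcoefT (f : lser R) (n : int) : R :=
  if n <= (ldeg f)%:Z then lcoef f `|(ldeg f)%:Z - n|%N else 0.

Definition lconst (c : R) : lser R := LSer 0 (fun k => if k == 0%N then c else 0).

Definition ladd (f g : lser R) : lser R :=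
  let d := maxn (ldeg f) (ldeg g) in
  LSer d (fun k => lcoefT f (d%:Z - k%:Z) + lcoefT g (d%:Z - k%:Z)).

Definition lopp (f : lser R) : lser R := LSer (ldeg f) (fun k => - lcoef f k).

Definition lmul (f g : lser R) : lser R :=
  LSer (ldeg f + ldeg g)
       (fun k => \sum_(i < k.+1) lcoef f i * lcoef g (k - i)).

Definition lexp (f : lser R) (n : nat) : lser R := iter n (lmul f) (lconst 1).

Definition leq_ser (f g : lser R) : Prop := forall n : int, lcoefT f n = lcoefT g n.

Definition lT : lser R := LSer 1 (fun k => if k == 0%N then 1 else 0).

Definition lTinv : lser R := LSer 0 (fun k => if k == 1%N then 1 else 0).

End LSer.

Inductive in_gen_alg (K : fieldType) (gens : lser K -> Prop) : lser K -> Prop :=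
| gen_const c : in_gen_alg gens (lconst c)
| gen_gen f : gens f -> in_gen_alg gens f
| gen_add f g : in_gen_alg gens f -> in_gen_alg gens g -> in_gen_alg gens (ladd f g)
| gen_mul f g : in_gen_alg gens f -> in_gen_alg gens g -> in_gen_alg gens (lmul f g)
| gen_ext f g : in_gen_alg gens f -> leq_ser f g -> in_gen_alg gens g.

Definition is_intK (K : fieldType) (c : K) : Prop := exists z : int, c = z%:~R.

Definition int_ser (K : fieldType) (f : lser K) : Prop :=
  forall n : int, is_intK (lcoefT f n).

Definition int_neg_ser (K : fieldType) (f : lser K) : Prop :=
  int_ser f /\ forall n : int, 0 <= n -> lcoefT f n = 0.

Definition one_plus_int_neg_ser (K : fieldType) (f : lser K) : Prop :=
  int_ser f /\ lcoefT f 0 = 1 /\ forall n : int, 0 < n -> lcoefT f n = 0.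

Definition unit_Zp (p : nat) (e : rat) : Prop :=
  ~~ (p%:Z %| numq e)%Z /\ ~~ (p%:Z %| denq e)%Z.

Definition xT (K : fieldType) (u : lser K) : lser K := lmul (lexp (lT K) 2) u.
Definition yT (K : fieldType) (g : nat) (u : lser K) : lser K :=
  lopp (lmul (lT K) (lexp (xT u) g)).

(* Main.v *)
Require Import Defs.
From HB Require Import structures.
From mathcomp Require Import all_boot all_order all_algebra.
From mathcomp Require Import boolp zify ring.
Import Order.TTheory GRing.Theory Num.Theory.
Local Open Scope ring_scope.
Set Implicit Arguments. Unset Strict Implicit.
Section PS.
Variable K : fieldType.
Definition ps := nat -> K.
HB.instance Definition _ := gen_eqMixin ps.
HB.instance Definition _ := gen_choiceMixin ps.

Definition ps0 : ps := fun _ => 0.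
Definition psadd (f g : ps) : ps := fun k => f k + g k.
Definition psopp (f : ps) : ps := fun k => - f k.
Lemma psaddA : associative psadd.
Proof. by move=> f g h; apply: funext => k; rewrite /psadd addrA. Qed.
Lemma psaddC : commutative psadd.
Proof. by move=> f g; apply: funext => k; rewrite /psadd addrC. Qed.
Lemma psadd0 : left_id ps0 psadd.
Proof. by move=> f; apply: funext => k; rewrite /psadd /ps0 add0r. Qed.
Lemma psaddN : left_inverse ps0 psopp psadd.
Proof. by move=> f; apply: funext => k; rewrite /psadd /ps0 /psopp addNr. Qed.
HB.instance Definition _ := GRing.isZmodule.Build ps psaddA psaddC psadd0 psaddN.

Definition tr (f : ps) n : {poly K} := \poly_(i < n) f i.
Definition cK (c : K) : ps := fun k => if k == 0%N then c else 0.
Definition psmul (f g : ps) : ps := fun n => (tr f n.+1 * tr g n.+1)`_n.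

Lemma psmulE f g n : psmul f g n = \sum_(i < n.+1) f i * g (n - i)%N.
Proof.
rewrite /psmul coefM; apply: eq_bigr => i _.
by rewrite !coef_poly ltn_ord ltnS leq_subr.
Qed.

Lemma agree (p p' q q' : {poly K}) n :
  (forall i, (i <= n)%N -> p`_i = p'`_i) -> (forall i, (i <= n)%N -> q`_i = q'`_i) ->
  (p * q)`_n = (p' * q')`_n.
Proof.
move=> Hp Hq; rewrite !coefM; apply: eq_bigr => i _.
rewrite Hp; last by rewrite -ltnS.
by rewrite Hq // leq_subr.
Qed.

Lemma tr_mul f g n : forall i, (i <= n)%N -> (tr (psmul f g) n.+1)`_i = (tr f n.+1 * tr g n.+1)`_i.
Proof.
move=> i hi; rewrite coef_poly ltnS hi /psmul.
apply: agree => j hj; rewrite !coef_poly !ltnS hj //.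
  by rewrite (leq_trans hj hi).
by rewrite (leq_trans hj hi).
Qed.

Lemma psmulA : associative psmul.
Proof.
move=> f g h; apply: funext => n.
rewrite {1}/psmul (agree (p' := tr f n.+1) (q' := tr g n.+1 * tr h n.+1)); last first.
- by apply: tr_mul.
- by [].
rewrite /psmul mulrA; apply: agree => //.
move=> i hi; rewrite -tr_mul //.
Qed.

Lemma psmulC : commutative psmul.
Proof. by move=> f g; apply: funext => n; rewrite /psmul mulrC. Qed.

Lemma psmul1 : left_id (cK 1) psmul.
Proof.
move=> f; apply: funext => n; rewrite /psmul (@agree _ 1 _ (tr f n.+1)) //.
  by rewrite mul1r coef_poly ltnSn.
by move=> i hi; rewrite coef_poly coefC ltnS hi /cK.
Qed.

Lemma psmulDl : left_distributive psmul psadd.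
Proof.
move=> f g h; apply: funext => n; rewrite /psmul /psadd.
rewrite (@agree _ (tr f n.+1 + tr g n.+1) _ (tr h n.+1)) //.
  by rewrite mulrDl coefD.
by move=> i hi; rewrite coefD !coef_poly ltnS hi.
Qed.

Lemma psone_neq0 : cK 1 != (0 : ps).
Proof.
apply/eqP => H; have := congr1 (fun f : ps => f 0%N) H.
by rewrite /cK /= => /eqP; rewrite oner_eq0.
Qed.

HB.instance Definition _ := GRing.Zmodule_isComNzRing.Build ps psmulA psmulC psmul1 psmulDl psone_neq0.

Lemma psmulE' (f g : ps) n : (f * g) n = \sum_(i < n.+1) f i * g (n - i)%N.
Proof. exact: psmulE. Qed.
Lemma psaddE (f g : ps) n : (f + g) n = f n + g n.
Proof. by []. Qed.
Lemma psoppE (f : ps) n : (- f) n = - f n.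
Proof. by []. Qed.
Lemma ps1E n : (1 : ps) n = if n == 0%N then 1 else 0.
Proof. by []. Qed.
Lemma ps0E n : (0 : ps) n = 0.
Proof. by []. Qed.

Definition z : ps := fun k => if k == 1%N then 1 else 0.

Lemma zmulE (f : ps) k : (z * f) k = if k == 0%N then 0 else f k.-1.
Proof.
rewrite psmulE'; case: k => [|k] /=.
  by rewrite big_ord1 /z mul0r.
rewrite big_ord_recl big_ord_recl /z /= mul0r add0r mul1r subn1 /= big1 ?addr0 //.
by move=> i _; rewrite /bump /= mul0r.
Qed.

Lemma zXmulE m (f : ps) k : (z ^+ m * f) k = if (m <= k)%N then f (k - m)%N else 0.
Proof.
elim: m k => [|m IH] k; first by rewrite expr0 mul1r subn0.
by rewrite exprS -mulrA zmulE; case: k => [|k] //=; rewrite IH ltnS subSS.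
Qed.

Lemma cKmulE c (f : ps) k : (cK c * f) k = c * f k.
Proof.
rewrite psmulE' big_ord_recl /cK /= subn0 big1 ?addr0 // => i _.
by rewrite /bump /= mul0r.
Qed.

Lemma mul0E (f g : ps) : (f * g) 0%N = f 0%N * g 0%N.
Proof. by rewrite psmulE' big_ord1. Qed.

Lemma cKD a b : cK (a + b) = cK a + cK b.
Proof. by apply: funext => k; rewrite psaddE /cK; case: eqP => _; rewrite ?addr0. Qed.

Lemma cK1 : cK 1 = 1. Proof. by []. Qed.
Lemma cK0 : cK 0 = 0. Proof. by apply: funext => k; rewrite /cK; case: eqP. Qed.

Lemma cKn m : cK m%:R = m%:R.
Proof. by elim: m => [|m IH]; rewrite ?cK0 // !mulrS cKD IH. Qed.

Definition Int (f : ps) := forall k, is_intK (f k).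

Lemma is_intK_add (a b : K) : is_intK a -> is_intK b -> is_intK (a + b).
Proof. by move=> [x ->] [y ->]; exists (x + y); rewrite rmorphD. Qed.
Lemma is_intK_mul (a b : K) : is_intK a -> is_intK b -> is_intK (a * b).
Proof. by move=> [x ->] [y ->]; exists (x * y); rewrite rmorphM. Qed.
Lemma is_intK_opp (a : K) : is_intK a -> is_intK (- a).
Proof. by move=> [x ->]; exists (- x); rewrite rmorphN. Qed.
Lemma is_intK0 : is_intK (0 : K). Proof. by exists 0. Qed.
Lemma is_intK1 : is_intK (1 : K). Proof. by exists 1. Qed.
Lemma is_intK_sum I (r : seq I) P (F : I -> K) :
  (forall i, is_intK (F i)) -> is_intK (\sum_(i <- r | P i) F i).
Proof.
move=> H; apply: (big_ind (@is_intK K)) => //; [exact: is_intK0 | exact: is_intK_add].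
Qed.

Lemma IntD f g : Int f -> Int g -> Int (f + g).
Proof. by move=> Hf Hg k; apply: is_intK_add. Qed.
Lemma IntN f : Int f -> Int (- f).
Proof. by move=> Hf k; apply: is_intK_opp. Qed.
Lemma IntM f g : Int f -> Int g -> Int (f * g).
Proof. by move=> Hf Hg k; rewrite psmulE'; apply: is_intK_sum => i; apply: is_intK_mul. Qed.
Lemma Int1 : Int 1.
Proof. by move=> k; rewrite ps1E; case: eqP => _; [exact: is_intK1|exact: is_intK0]. Qed.
Lemma Int0 : Int 0.
Proof. by move=> k; exact: is_intK0. Qed.
Lemma IntX f m : Int f -> Int (f ^+ m).
Proof. by move=> Hf; elim: m => [|m IH]; rewrite ?expr0 ?exprS; [exact: Int1 | apply: IntM]. Qed.
Lemma Intz : Int z.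
Proof. by move=> k; rewrite /z; case: eqP => _; [exact: is_intK1|exact: is_intK0]. Qed.
Lemma IntMn f m : Int f -> Int (f *+ m).
Proof. by move=> Hf; elim: m => [|m IH]; rewrite ?mulr0n ?mulrS; [exact: Int0| apply: IntD]. Qed.
Lemma Int_sum I (r : seq I) P (F : I -> ps) :
  (forall i, Int (F i)) -> Int (\sum_(i <- r | P i) F i).
Proof. move=> H; apply: (big_ind Int) => //; [exact: Int0 | exact: IntD]. Qed.

Lemma vanish (V F : ps) N : V 0%N = 1 -> (forall k, (k < N)%N -> (V * F) k = 0) ->
  forall k, (k < N)%N -> F k = 0.
Proof.
move=> V0 H; elim/ltn_ind => k IH hk.
have := H k hk; rewrite psmulE' big_ord_recl V0 mul1r subn0 big1 ?addr0 // => i _.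
rewrite IH ?mulr0 //.
  by rewrite lift0; have := ltn_ord i; lia.
by rewrite lift0; have := ltn_ord i; lia.
Qed.

Lemma X0E (f : ps) m : (f ^+ m) 0%N = (f 0%N) ^+ m.
Proof. by elim: m => [|m IH]; rewrite ?expr0 ?exprS ?mul0E ?IH. Qed.

Definition P (f : lser K) : ps := lcoef f.
Definition rep (f : lser K) (m : nat) (F : ps) := z ^+ m * P f = z ^+ (ldeg f) * F.

Lemma rep_coef f m F : rep f m F ->
  forall n : int, lcoefT f n = if n <= m%:Z then F `|m%:Z - n|%N else 0.
Proof.
move=> H n; have E k : (z ^+ m * P f) k = (z ^+ ldeg f * F) k by rewrite H.
have {}E k := etrans (esym (zXmulE _ _ _)) (etrans (E k) (zXmulE _ _ _)).
rewrite /lcoefT; set d := ldeg f in E *.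
case: ifP => h1.
  have := E (m + `|d%:Z - n|)%N; rewrite leq_addr addKn /P => ->.
  case: ifP => h2; case: ifP => h3 //; try lia.
  by congr F; lia.
case: ifP => h2 //.
have := E (d + `|m%:Z - n|)%N; rewrite leq_addr addKn.
by case: ifP => h3 //; lia.
Qed.

Lemma coef_rep f m F : rep f m F -> forall k : nat, F k = lcoefT f (m%:Z - k%:Z).
Proof.
move=> H k; rewrite (rep_coef H); case: ifP => h; last by lia.
by congr F; lia.
Qed.

Lemma rep_leq f g m F : rep f m F -> rep g m F -> leq_ser f g.
Proof. by move=> Hf Hg n; rewrite (rep_coef Hf) (rep_coef Hg). Qed.

Lemma leq_rep f g m F G : leq_ser f g -> rep f m F -> rep g m G -> F = G.
Proof. by move=> H Hf Hg; apply: funext => k; rewrite (coef_rep Hf) (coef_rep Hg) H. Qed.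

Lemma rep_conv f m F m' F' : rep f m F -> m = m' -> F = F' -> rep f m' F'.
Proof. by move=> H <- <-. Qed.

Lemma rep_const c : rep (lconst c) 0 (cK c).
Proof. by rewrite /rep /= expr0 !mul1r. Qed.

Lemma rep_T : rep (lT K) 1 1.
Proof. by []. Qed.

Lemma rep_Tinv : rep (lTinv K) 0 z.
Proof. by rewrite /rep /= expr0 !mul1r. Qed.

Lemma P_mul f g : P (lmul f g) = P f * P g.
Proof. by apply: funext => k; rewrite psmulE'. Qed.

Lemma rep_mul f g m m' F G : rep f m F -> rep g m' G -> rep (lmul f g) (m + m') (F * G).
Proof.
rewrite /rep P_mul /= !exprD => Hf Hg.
by rewrite mulrACA Hf Hg mulrACA.
Qed.

Lemma rep_opp f m F : rep f m F -> rep (lopp f) m (- F).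
Proof.
rewrite /rep => H; have -> : P (lopp f) = - P f by apply: funext.
by rewrite mulrN H mulrN.
Qed.

Lemma lcoefT_shift f d k : (ldeg f <= d)%N ->
  lcoefT f (d%:Z - k%:Z) = (z ^+ (d - ldeg f) * P f) k.
Proof.
move=> hd; rewrite zXmulE /lcoefT /P; set e := ldeg f in hd *.
case: ifP => h1; case: ifP => h2 //; try lia.
by congr lcoef; lia.
Qed.

Lemma rep_add f g m F G : rep f m F -> rep g m G -> rep (ladd f g) m (F + G).
Proof.
rewrite /rep => Hf Hg.
set d := maxn (ldeg f) (ldeg g).
have -> : P (ladd f g) = z ^+ (d - ldeg f) * P f + z ^+ (d - ldeg g) * P g.
  apply: funext => k; rewrite psaddE /P /= -!lcoefT_shift //.
  - by rewrite leq_maxr.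
  - by rewrite leq_maxl.
rewrite /= -/d mulrDr !mulrA -!exprD !(addnC m) !exprD -!mulrA Hf Hg !mulrA -!exprD.
rewrite !subnK ?leq_maxl ?leq_maxr //; by rewrite mulrDr.
Qed.

Lemma rep_exp f m F n : rep f m F -> rep (lexp f n) (n * m) (F ^+ n).
Proof.
move=> H; elim: n => [|n IH]; first by rewrite mul0n expr0; exact: rep_const.
rewrite /lexp iterS -/(lexp f n) exprS mulSn.
exact: rep_mul.
Qed.

Lemma rep_shift f m F j : rep f m F -> rep f (m + j) (z ^+ j * F).
Proof. move=> H; rewrite /rep exprD -mulrA mulrCA H mulrCA //. Qed.

Lemma cKN c : cK (- c) = - cK c.
Proof. by apply: funext => j; rewrite psoppE /cK; case: eqP; rewrite ?oppr0. Qed.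

Lemma psMnE (f : ps) m j : (f *+ m) j = f j *+ m.
Proof. by elim: m => [|m IH]; rewrite ?mulr0n // !mulrS psaddE IH. Qed.

Lemma pssumE I (r : seq I) (Q : pred I) (F : I -> ps) j :
  (\sum_(i <- r | Q i) F i) j = \sum_(i <- r | Q i) F i j.
Proof.
elim: r => [|x r IH]; first by rewrite !big_nil.
by rewrite !big_cons; case: (Q x); rewrite ?psaddE IH.
Qed.

Lemma gen_exp (gens : lser K -> Prop) f n : in_gen_alg gens f -> in_gen_alg gens (lexp f n).
Proof.
move=> H; elim: n => [|n IH]; first exact: gen_const.
by rewrite /lexp iterS; apply: gen_mul.
Qed.

End PS.
Arguments z {K}.
Section Main.
Variable K : fieldType.
Variable u : lser K.
Variables g k : nat.
Hypothesis hg : (1 <= g)%N.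
Hypothesis hk : (1 <= k)%N.
Hypothesis hu : one_plus_int_neg_ser u.

Definition U : ps K := fun j => lcoefT u (- (j%:Z)).

Lemma rep_u : rep u 0 U.
Proof.
rewrite /rep; apply: funext => j; rewrite expr0 mul1r zXmulE.
have := @lcoefT_shift K u (ldeg u) j (leqnn _); rewrite subnn expr0 mul1r /P => <-.
case: ifP => h.
  by rewrite /U; congr lcoefT; lia.
by apply: hu.2.2; lia.
Qed.

Lemma IntU : Int U.
Proof. by move=> j; apply: hu.1. Qed.

Lemma U0 : U 0%N = 1.
Proof. by rewrite /U oppr0; exact: hu.2.1. Qed.

Lemma rep_x : rep (xT u) 2 U.
Proof.
apply: rep_conv (rep_mul (rep_exp 2 (rep_T K)) rep_u) _ _ => //.
by rewrite expr1n mul1r.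
Qed.

Lemma rep_y : rep (yT g u) (2 * g).+1 (- U ^+ g).
Proof.
apply: rep_conv (rep_opp (rep_mul (rep_T K) (rep_exp g rep_x))) _ _.
  by rewrite muln2 -addnn add1n mul2n -addnn.
by rewrite mul1r.
Qed.

Definition Zt : ps K := z ^+ (4 * g).
Definition B : ps K := U ^+ (2 * g).
Definition n := (2 * g * k)%N.
Definition j0 := (k * (2 * g).-1)%N.
Definition pp := (4 * g * k).+1.

Definition term i := lmul (lconst (- ('C(n, j0 + i.+1))%:R))
   (lmul (yT g u) (lexp (xT u) (g * (2 * i).+1))).
Definition aterm i := (Zt ^+ (k - i.+1) * B ^+ i.+1) *+ 'C(n, j0 + i.+1).

Lemma rep_term i : (i < k)%N -> rep (term i) pp (aterm i).
Proof.
move=> hi.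
have h := rep_shift (4 * g * (k - i.+1)) (rep_mul (rep_const (- ('C(n, j0 + i.+1))%:R))
   (rep_mul rep_y (rep_exp (g * (2 * i).+1) rep_x))).
apply: rep_conv h _ _.
  rewrite /pp; nia.
rewrite /aterm /Zt /B cKN cKn -!exprM.
have -> : (2 * g * i.+1 = g + g * (2 * i).+1)%N by nia.
rewrite exprD; ring.
Qed.


Fixpoint asum i := match i with 0%N => lconst 0 | i.+1 => ladd (asum i) (term i) end.

Lemma rep_asum i : (i <= k)%N -> rep (asum i) pp (\sum_(j < i) aterm j).
Proof.
elim: i => [|i IH] hi /=.
  apply: rep_conv (rep_shift pp (rep_const 0)) _ _ => //.
  by rewrite big_ord0 cK0 mulr0.
rewrite big_ord_recr /=; apply: rep_add; first by apply: IH; lia.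
exact: rep_term.
Qed.

Definition A := \sum_(j < k) aterm j.
Definition a := asum k.

Lemma rep_a : rep a pp A.
Proof. exact: rep_asum. Qed.

Lemma Int_aterm i : Int (aterm i).
Proof.
apply: IntMn; apply: IntM; apply: IntX; rewrite ?/Zt ?/B; apply: IntX.
  exact: Intz.
exact: IntU.
Qed.

Lemma IntA : Int A.
Proof. by apply: Int_sum => j; apply: Int_aterm. Qed.

Lemma gens_a : in_gen_alg (fun f => f = xT u \/ f = yT g u) a.
Proof.
rewrite /a; elim: k => [|i IH] /=; first exact: gen_const.
apply: gen_add => //; apply: gen_mul; first exact: gen_const.
apply: gen_mul; first by apply: gen_gen; right.
by apply: gen_exp; apply: gen_gen; left.
Qed.

Definition e0 : rat := (('C(n, j0))%:Z)%:~R.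

Definition Lser := ladd (lexp (lT K) pp) (lopp (lmul (lconst (ratr e0)) (lT K))).
Definition Lps : ps K := 1 - z ^+ (4 * g * k) * ('C(n, j0))%:R.

Lemma rep_L : rep Lser pp Lps.
Proof.
apply: rep_add.
  by apply: rep_conv (rep_exp pp (rep_T K)) _ _; rewrite ?muln1 ?expr1n.
apply: rep_opp; apply: rep_conv (rep_shift (4 * g * k) (rep_mul (rep_const (ratr e0)) (rep_T K))) _ _.
  by rewrite /pp add0n add1n.
by rewrite /e0 ratr_int -pmulrn cKn mulr1 mulrC.
Qed.

Lemma IntL : Int Lps.
Proof.
apply: IntD; first exact: Int1.
apply: IntN; apply: IntM; first by apply: IntX; exact: Intz.
by rewrite -mulr_natl mulr1; apply: IntMn; exact: Int1.
Qed.


Hypothesis hrel : leq_ser (ladd (ladd (lexp u (2 * g)) (lopp (lexp u (2 * g).-1)))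
                (lexp (lTinv K) (4 * g))) (lconst 0).

Lemma Rel : U ^+ (2 * g).-1 = Zt + B.
Proof.
have h : rep (ladd (ladd (lexp u (2 * g)) (lopp (lexp u (2 * g).-1)))
                (lexp (lTinv K) (4 * g))) 0 (B - U ^+ (2 * g).-1 + Zt).
  apply: rep_add; first apply: rep_add.
  - by apply: rep_conv (rep_exp _ rep_u) _ _; rewrite ?muln0.
  - by apply: rep_opp; apply: rep_conv (rep_exp _ rep_u) _ _; rewrite ?muln0.
  - by apply: rep_conv (rep_exp _ (rep_Tinv K)) _ _; rewrite ?muln0.
have := leq_rep hrel h (rep_const 0); rewrite cK0 => /eqP.
by rewrite addrAC subr_eq0 => /eqP <-; rewrite addrC.
Qed.

Definition V := B ^+ j0.
Definition t j := Zt ^+ (n - j) * B ^+ j *+ 'C(n, j).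

Lemma hn : n = (j0 + k)%N.
Proof.
rewrite /n /j0; case: g hg => // g' _.
by rewrite mul2n doubleS /= mulnC -addn1 mulnDr muln1 mulnC -mul2n.
Qed.

Lemma main_id : V * (Lps - A) = \sum_(0 <= j < j0) t j.
Proof.
have hV : V = \sum_(0 <= j < n.+1) t j.
  rewrite big_mkord -exprDn -Rel /V /B -!exprM; congr (_ ^+ _).
  rewrite /n /j0; set m := (2 * g).-1; lia.
have hS : \sum_(j0.+1 <= j < n.+1) t j = V * A.
  rewrite -{1}(add0n j0.+1) big_addn.
  have -> : (n.+1 - j0.+1 = k)%N by rewrite hn; lia.
  rewrite big_mkord /A big_distrr /=; apply: eq_bigr => i _.
  rewrite /t /aterm /V mulrnAr; congr (_ *+ _); last by congr binomial; lia.
  have -> : (n - (i + j0.+1) = k - i.+1)%N by rewrite hn; lia.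
  rewrite (addnC i) addSnnS exprD; ring.
have ht : t j0 = V * (z ^+ (4 * g * k) * ('C(n, j0))%:R).
  rewrite /t /V /Zt -exprM mulr_natr mulrnAr.
  have -> : (n - j0 = k)%N by rewrite hn addKn.
  by rewrite mulrC.
have hV' : V = \sum_(0 <= j < j0) t j + (t j0 + V * A).
  have hsplit : \sum_(0 <= j < n.+1) t j = \sum_(0 <= j < j0) t j + (t j0 + \sum_(j0.+1 <= j < n.+1) t j).
    rewrite (@big_cat_nat _ _ _ j0) //=; last by rewrite hn; lia.
    by rewrite (@big_ltn _ _ _ j0) //; rewrite hn; lia.
  by rewrite -hS -hsplit.
rewrite /Lps mulrBr mulrBr mulr1 -ht {1}hV'.
by rewrite addrA (addrAC _ _ (- t j0)) addrK addrK.
Qed.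


Lemma low_vanish r : (r < pp.+1)%N -> (\sum_(0 <= j < j0) t j) r = 0.
Proof.
move=> hr; rewrite pssumE big_nat big1 // => j /andP[_ hj].
rewrite /t psMnE /Zt -exprM zXmulE ifF ?mul0rn //.
have : (4 * g * k.+1 <= 4 * g * (n - j))%N.
  by rewrite leq_mul2l; apply/orP; right; rewrite hn; lia.
rewrite /pp in hr; lia.
Qed.

Lemma vanishLA r : (r < pp.+1)%N -> (Lps - A) r = 0.
Proof.
apply: (@vanish _ V).
  by rewrite /V /B !X0E U0 !expr1n.
by move=> r' hr'; rewrite main_id low_vanish.
Qed.

Definition Gser := ladd Lser (lopp a).

Lemma rep_G : rep Gser pp (Lps - A).
Proof. exact: rep_add rep_L (rep_opp rep_a). Qed.

End Main.

Lemma not_dvd_fact p m : prime p -> (m < p)%N -> ~~ (p %| m`!)%N.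
Proof.
move=> hp; elim: m => [|m IH] hm.
  by rewrite fact0 dvdn1; case: eqP hp => // ->.
rewrite factS Euclid_dvdM // negb_or IH ?andbT; last by lia.
apply/negP => /dvdn_leq; lia.
Qed.


Unset Implicit Arguments.
Theorem lemma4p2 (g p : nat) (K : fieldType) (u : lser K) :
  (2 <= g)%N -> prime p -> (p %% (4 * g))%N = 1%N ->
  [pchar K] =i pred0 ->
  one_plus_int_neg_ser u ->
  leq_ser (ladd (ladd (lexp u (2 * g)) (lopp (lexp u (2 * g).-1)))
                (lexp (lTinv K) (4 * g)))
          (lconst 0) ->
  exists (e0 : rat) (a gT : lser K),
    [/\ unit_Zp p e0,
        in_gen_alg (fun f => f = xT u \/ f = yT g u) a /\ int_ser a,
        int_neg_ser gT &
        leq_ser (ladd (lexp (lT K) p) (lopp (lmul (lconst (ratr e0)) (lT K))))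
                (ladd a gT)].
Proof.
move=> hg2 hp hmod _ hu hrel.
set k := (p %/ (4 * g))%N.
have hpk : p = (4 * g * k).+1 by rewrite {1}(divn_eq p (4 * g)) hmod addn1 mulnC.
have hg : (0 < g)%N by lia.
have hk : (0 < k)%N.
  rewrite lt0n; apply/negP => /eqP hk0; move: hp; rewrite hpk hk0 muln0.
  by [].
have hpp : p = pp g k by [].
exists (e0 g k), (a u g k), (Gser u g k); split.
- rewrite /unit_Zp /e0 numq_int denq_int; split.
    rewrite dvdzE /=; apply/negP => hd.
    have hj : (j0 g k <= n g k)%N by rewrite (@hn g k hg); lia.
    have hlt : (n g k < p)%N by rewrite hpk /n; lia.
    by move: (not_dvd_fact hp hlt); rewrite -(bin_fact hj) (dvdn_mulr _ hd).
  by rewrite dvdzE /= dvdn1; apply/negP => /eqP hp1; move: hp; rewrite hp1.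
- split; first exact: gens_a.
  move=> m; rewrite (rep_coef (rep_a hg hk hu)); case: ifP => _; last exact: is_intK0.
  exact: IntA.
- have hG := rep_G hg hk hu.
  split.
    move=> m; rewrite (rep_coef hG); case: ifP => _; last exact: is_intK0.
    by apply: IntD; [exact: IntL | apply: IntN; exact: IntA].
  move=> m hm; rewrite (rep_coef hG); case: ifP => h //.
  apply: (vanishLA hg hk hu hrel); lia.
- rewrite hpp; apply: (rep_leq (rep_L K g k)).
  apply: rep_conv (rep_add (rep_a hg hk hu) (rep_G hg hk hu)) _ _ => //.
  by rewrite addrC subrK.
Qed.
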